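(* Let $k\ne\mathbb{F}_2$ be a field, $p=\operatorname{char}(k)$, and let $f\in k[x_1,\dots,x_n]_d$ with $d\ge3$. Suppose that in some basis $x_1,\dots,x_n$ the following hold: (1) $\Xi(\partial f/\partial x_i)\ne\varnothing$ for all $1\le i\le n$; (2) $\Xi(\partial f/\partial x_i)\cap\Xi(\partial f/\partial x_j)=\varnothing$ for all $1\le i<j\le n$; (3) $\Xi(f)$ equals the set of exponent vectors $(d_1,\dots,d_n)$ with $\sum d_i=d$ such that $p\nmid d_i$ for some $i$ and $\Xi\bigl(\partial(x_1^{d_1}\cdots x_n^{d_n})/\partial x_i\bigr)\subset\bigcup_{j=1}^n\Xi(\partial f/\partial x_j)$ for all $1\le i\le n$; (4) the graph with vertex set $\{1,\dots,n\}$ and edges $\{(ij)\mid\partial^2f/\partial x_i\partial x_j\ne0\}$ is connected. Then $f$ is not a direct sum.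
   Context: For a nonzero form $h$ in the basis $x_1,\dots,x_n$, the state $\Xi(h)$ is the set of exponent vectors $(d_1,\dots,d_n)$ of monomials $x_1^{d_1}\cdots x_n^{d_n}$ appearing in $h$ with nonzero coefficient; $\Xi(0)=\varnothing$. (For $p=0$, ''$p\nmid d_i$'' means $d_i\ne0$.) A form $f$ is a direct sum if, after a linear change of variables, $f=f_1(x_1,\dots,x_a)+f_2(x_{a+1},\dots,x_n)$ with $1\le a\le n-1$ and $f_1,f_2\ne0$. *)

(* Defs.v *)
From HB Require Import structures.
From mathcomp Require Import all_boot all_order all_algebra.
From mathcomp Require Import mpoly.
Set Implicit Arguments. Unset Strict Implicit. Unset Printing Implicit Defensive.
Import Order.TTheory GRing.Theory Num.Theory.
Local Open Scope ring_scope.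

Definition state (k : fieldType) (n : nat) (h : {mpoly k[n]}) : pred 'X_{1..n} :=
  fun m => m \in msupp h.

(* "p does not divide e" where p = char k; for p = 0 this means e <> 0. *)
Definition char_ndvd (k : fieldType) (e : nat) : Prop :=
  (e != 0)%N /\ forall p : nat, p \in [pchar k] -> ~~ (p %| e)%N.

Definition lin_change (k : fieldType) (n : nat) (A : 'M[k]_n) (f : {mpoly k[n]})
  : {mpoly k[n]} :=
  comp_mpoly [tuple \sum_(j < n) A i j *: 'X_j | i < n] f.

Definition only_vars (k : fieldType) (n : nat) (S : pred 'I_n) (h : {mpoly k[n]}) : Prop :=
  forall m : 'X_{1..n}, m \in msupp h -> forall i : 'I_n, ~~ S i -> m i = 0%N.

(* f is a direct sum: after an invertible linear change of variables,
   f = f1(x_1..x_a) + f2(x_{a+1}..x_n), 1 <= a <= n-1, f1, f2 <> 0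
   (0-based indices: first block is i < a). *)
Definition direct_sum (k : fieldType) (n : nat) (f : {mpoly k[n]}) : Prop :=
  exists (A : 'M[k]_n) (a : nat) (f1 f2 : {mpoly k[n]}),
    [/\ A \in unitmx, (1 <= a <= n - 1)%N,
        lin_change A f = f1 + f2,
        f1 != 0 /\ f2 != 0 &
        only_vars (fun i : 'I_n => (i < a)%N) f1 /\
        only_vars (fun i : 'I_n => (a <= i)%N) f2].

Definition hess_graph (k : fieldType) (n : nat) (f : {mpoly k[n]}) : rel 'I_n :=
  fun i j => mderiv j (mderiv i f) != 0.

Definition connected_graph (T : finType) (e : rel T) : Prop :=
  forall x y : T, connect e x y.

(* Main.v *)
Require Import Defs.
From HB Require Import structures.
From mathcomp Require Import all_boot all_order all_algebra.
From mathcomp Require Import mpoly zify ring.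
Import Order.TTheory GRing.Theory Num.Theory.
Set Implicit Arguments. Unset Strict Implicit. Unset Printing Implicit Defensive.
Local Open Scope ring_scope.

Lemma mpoly_ind2 n (R : comNzRingType) (P : {mpoly R[n]} -> Prop) :
  (forall c, P c%:MP) -> (forall i, P 'X_i) ->
  (forall p q, P p -> P q -> P (p + q)) ->
  (forall p q, P p -> P q -> P (p * q)) -> forall p, P p.
Proof.
move=> hC hX hD hM p; elim/mpolyind: p => [|c m p _ _ hp].
  by rewrite -mpolyC0.
apply: (hD) => //; rewrite -mul_mpolyC; apply: (hM) => //.
rewrite mpolyXE_id; apply: big_ind => //.
  by rewrite -mpolyC1.
move=> i _; elim: (m i) => [|e IH]; first by rewrite expr0 -mpolyC1.
by rewrite exprS; apply: (hM).
Qed.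

Lemma submm' n (m : 'X_{1..n}) : (m - m = 0)%MM.
Proof. by apply/mnmP=> i; rewrite !mnmE subnn. Qed.

Lemma chain_rule n k (R : comNzRingType) (lq : n.-tuple {mpoly R[k]})
  (p : {mpoly R[n]}) (i : 'I_k) :
  mderiv i (p \mPo lq) = \sum_(j < n) mderiv i (tnth lq j) * (mderiv j p \mPo lq).
Proof.
elim/mpoly_ind2: p.
- move=> c; rewrite comp_mpolyC !mderivC big1 // => j _.
  by rewrite mderivC comp_mpoly0 mulr0.
- move=> j0; rewrite comp_mpolyXU -tnth_nth (bigD1 j0) //= big1 ?addr0.
    by rewrite mderivX mnm1E eqxx submm' mpolyX0 scale1r comp_mpoly1 mulr1.
  move=> j /negbTE hj; rewrite mderivX mnm1E eq_sym hj scale0r comp_mpoly0.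
  by rewrite mulr0.
- move=> p q hp hq; rewrite raddfD mderivD hp hq -big_split /=.
  by apply: eq_bigr => j _; rewrite mderivD raddfD mulrDr.
- move=> p q hp hq; rewrite rmorphM mderivM hp hq mulr_suml mulr_sumr -big_split /=.
  apply: eq_bigr => j _; rewrite mderivM raddfD /= !rmorphM mulrDr.
  by congr (_ + _); [rewrite mulrA | rewrite mulrCA].
Qed.

Lemma comp_mpolyA n k l (R : comNzRingType) (lq : n.-tuple {mpoly R[k]})
  (lr : k.-tuple {mpoly R[l]}) (p : {mpoly R[n]}) :
  (p \mPo lq) \mPo lr = p \mPo [tuple (tnth lq i \mPo lr) | i < n].
Proof.
elim/mpoly_ind2: p.
- by move=> c; rewrite !comp_mpolyC.
- by move=> j; rewrite !comp_mpolyXU -!tnth_nth tnth_map tnth_ord_tuple.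
- by move=> p q hp hq; rewrite !raddfD /= hp hq.
- by move=> p q hp hq; rewrite !rmorphM /= hp hq.
Qed.

Definition ltup (k : fieldType) n (M : 'M[k]_n) : n.-tuple {mpoly k[n]} :=
  [tuple \sum_(j < n) M i j *: 'X_j | i < n].

Lemma lin_changeE (k : fieldType) n (M : 'M[k]_n) p :
  lin_change M p = p \mPo ltup M.
Proof. by []. Qed.

Lemma mderiv_ltup (k : fieldType) n (M : 'M[k]_n) l j :
  mderiv l (tnth (ltup M) j) = (M j l)%:MP.
Proof.
rewrite tnth_mktuple raddf_sum (bigD1 l) //= big1 ?addr0.
  by rewrite mderivZ mderivX mnm1E eqxx submm' mpolyX0 scale1r -mul_mpolyC mulr1.
move=> i /negbTE hi; rewrite mderivZ mderivX mnm1E hi scale0r scaler0 //.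
Qed.

Lemma ltup_comp (k : fieldType) n (A B : 'M[k]_n) p :
  lin_change B (lin_change A p) = lin_change (A *m B) p.
Proof.
rewrite !lin_changeE comp_mpolyA; congr comp_mpoly; apply: eq_from_tnth => i.
rewrite !tnth_map !tnth_ord_tuple raddf_sum /=.
under eq_bigr => j _ do rewrite comp_mpolyZ comp_mpolyXU -tnth_nth tnth_mktuple scaler_sumr.
rewrite exchange_big /=; apply: eq_bigr => l _; rewrite mxE scaler_suml.
by apply: eq_bigr => j _; rewrite scalerA.
Qed.

Lemma ltup1 (k : fieldType) n p : lin_change (1%:M : 'M[k]_n) p = p.
Proof.
rewrite lin_changeE -[RHS]comp_mpoly_id; congr comp_mpoly.
apply: eq_from_tnth => i; rewrite !tnth_mktuple (bigD1 i) //= big1 ?addr0.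
  by rewrite mxE eqxx scale1r.
by move=> j /negbTE hj; rewrite mxE eq_sym hj scale0r.
Qed.

Lemma only_vars_deriv (k : fieldType) n (S : pred 'I_n) (h : {mpoly k[n]}) j :
  only_vars S h -> ~~ S j -> mderiv j h = 0.
Proof.
move=> ho hj; apply/mpolyP => m; rewrite mcoeff_mderiv mcoeff0.
case: (boolP (m + U_(j) \in msupp h)%MM) => [/ho /(_ j hj)|].
  by rewrite mnmDE mnm1E eqxx addn1.
by rewrite mcoeff_msupp negbK => /eqP ->; rewrite mul0rn.
Qed.

Lemma subUK n (m : 'X_{1..n}) j : (0 < m j)%N -> (m - U_(j) + U_(j))%MM = m.
Proof.
move=> h; apply/mnmP => x; rewrite mnmDE mnmBE mnm1E; case: eqP => [<-|_].
  by rewrite addn1 subn1 prednK.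
by rewrite addn0 subn0.
Qed.

Lemma subUS n (m : 'X_{1..n}) j : (0 < m j)%N -> ((m - U_(j))%MM j).+1 = m j.
Proof. by move=> h; rewrite mnmBE mnm1E eqxx subn1 prednK. Qed.

Theorem theorem5p5 (k : fieldType) (n d : nat) (f : {mpoly k[n]}) :
  (exists x : k, x != 0 /\ x != 1) ->
  f \is d.-homog ->
  (3 <= d)%N ->
  (forall i : 'I_n, exists m, state (mderiv i f) m) ->
  (forall i j : 'I_n, (i < j)%N ->
     forall m, ~ (state (mderiv i f) m /\ state (mderiv j f) m)) ->
  (forall m : 'X_{1..n},
     state f m <->
     [/\ mdeg m = d,
         exists i : 'I_n, char_ndvd k (m i) &
         forall (i : 'I_n) (m' : 'X_{1..n}),
           state (mderiv i ('X_[m] : {mpoly k[n]})) m' ->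
           exists j : 'I_n, state (mderiv j f) m']) ->
  connected_graph (hess_graph f) ->
  ~ direct_sum f.
Proof.
move=> _ hom _ h1 h2 h3 conn [A [a [f1 [f2 [Au /andP[ha1 ha2] hg _ [o1 o2]]]]]].
set B := invmx A.
set F1 := lin_change B f1.
pose c i l := \sum_(j < n) A i j * ((j < a)%N)%:R * B j l.
have hBA : B *m A = 1%:M by rewrite mulVmx.
have hAB : A *m B = 1%:M by rewrite mulmxV.
have hdg : forall j, mderiv j (lin_change A f) =
    \sum_i A i j *: (mderiv i f \mPo ltup A).
  move=> j; rewrite lin_changeE chain_rule; apply: eq_bigr => i _.
  by rewrite mderiv_ltup mul_mpolyC.
have hd1 : forall j, mderiv j f1 = ((j < a)%N)%:R *: mderiv j (lin_change A f).
  move=> j; rewrite hg mderivD; case: (ltnP j a) => hj.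
    by rewrite (only_vars_deriv o2) ?addr0 ?scale1r //= -ltnNge.
  by rewrite (only_vars_deriv o1) ?add0r ?scale0r //= -leqNgt.
have hD : forall l, mderiv l F1 = \sum_i c i l *: mderiv i f.
  move=> l; rewrite /F1 lin_changeE chain_rule.
  under eq_bigr => j _ do rewrite mderiv_ltup mul_mpolyC hd1 hdg comp_mpolyZ
     (raddf_sum (comp_mpoly (ltup B))) !scaler_sumr.
  rewrite exchange_big /=; apply: eq_bigr => i _; rewrite /c scaler_suml.
  apply: eq_bigr => j _; rewrite comp_mpolyZ -lin_changeE ltup_comp hAB ltup1.
  rewrite !scalerA; congr (_ *: _).
  ring.
have hsupp : forall i j m, i != j -> m \in msupp (mderiv i f) ->
    (mderiv j f)@_m = 0.
  move=> i j m hij hi; apply/eqP; rewrite -[_ == 0]negbK -mcoeff_msupp.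
  apply/negP => hj.
  case: (ltngtP i j) => [lt|lt|/val_inj eq].
  - exact: (h2 i j lt m (conj hi hj)).
  - exact: (h2 j i lt m (conj hj hi)).
  - by rewrite eq eqxx in hij.
have hcoef : forall l m, (mderiv l F1)@_m != 0 ->
    exists j, m \in msupp (mderiv j f).
  move=> l m; rewrite hD.
  case: (pickP (fun j => m \in msupp (mderiv j f))) => [j hj _|hn].
    by exists j.
  rewrite raddf_sum big1 ?eqxx // => j _; rewrite /= mcoeffZ.
  by move: (hn j); rewrite /= mcoeff_msupp => /negbFE/eqP ->; rewrite mulr0.
have hoff : forall i l, i != l -> c i l = 0.
  move=> i l hil; apply/eqP; apply/negP => /negP hc.
  have [mu hmu] := h1 i.
  have e1 : (mderiv l F1)@_mu = c i l * (mderiv i f)@_mu.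
    rewrite hD raddf_sum (bigD1 i) //= big1 ?addr0; first by rewrite mcoeffZ.
    by move=> j hji; rewrite mcoeffZ (hsupp i j) ?mulr0 // eq_sym.
  have nz1 : (mderiv l F1)@_mu != 0 by rewrite e1 mulf_neq0 // -mcoeff_msupp.
  set m := (mu + U_(l))%MM.
  have hml : (mu l).+1 = m l by rewrite mnmDE mnm1E eqxx addn1.
  have [hmF1 hmF2] : F1@_m != 0 /\ ((m l)%:R : k) != 0.
    by move: nz1; rewrite mcoeff_mderiv -/m -(mulr_natr (F1@_m)) hml mulf_eq0 negb_or; move/andP.
  have hdeg : mdeg m = d.
    have : (mu + U_(i))%MM \in msupp f.
      rewrite mcoeff_msupp; move: hmu; rewrite /state mcoeff_msupp mcoeff_mderiv.
      by apply: contraNneq => ->; rewrite mul0rn.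
    move/(dhomog_mf hom) => /=; rewrite /m !mdegD !mdeg1 => <-; done.
  have hm : state f m.
    apply/h3; split => //.
      exists l; split; first by rewrite -hml.
      by move=> p hp; rewrite (dvdn_pcharf hp); exact: hmF2.
    move=> j m'; rewrite /state mderivX.
    case: (boolP ((m j)%:R == 0 :> k)) => [/eqP ->|hj].
      by rewrite scale0r msupp0.
    have mj0 : (m j != 0)%N by apply: contraNneq hj => ->.
    rewrite msuppMCX // inE => /eqP ->.
    apply: (hcoef j); rewrite mcoeff_mderiv.
    have mj : (0 < m j)%N by rewrite lt0n.
    rewrite (subUS mj).
    have hmj := subUK mj.
    by rewrite hmj -(mulr_natr (F1@_m)) mulf_neq0.
  have hl : mu \in msupp (mderiv l f).
    rewrite mcoeff_msupp mcoeff_mderiv -/m -(mulr_natr (f@_m)) hml mulf_neq0 //.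
    by rewrite -mcoeff_msupp.
  by move: hl; rewrite mcoeff_msupp (hsupp i l mu hil hmu) eqxx.
have hedge : forall i j, hess_graph f i j -> c i i = c j j.
  move=> i j /= hij.
  have e1 : mderiv j (mderiv i F1) = c i i *: mderiv j (mderiv i f).
    rewrite hD raddf_sum (bigD1 i) //= big1 ?addr0; first by rewrite mderivZ.
    by move=> x hx; rewrite (hoff x i hx) scale0r mderiv0.
  have e2 : mderiv i (mderiv j F1) = c j j *: mderiv i (mderiv j f).
    rewrite hD raddf_sum (bigD1 j) //= big1 ?addr0; first by rewrite mderivZ.
    by move=> x hx; rewrite (hoff x j hx) scale0r mderiv0.
  rewrite -(mderiv_comm i j F1) -(mderiv_comm i j f) e1 in e2.
  move/eqP: e2; rewrite -subr_eq0 -scalerBl scaler_eq0 (negbTE hij) orbF.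
  by rewrite subr_eq0 => /eqP.
have hall : forall x y, c x x = c y y.
  move=> x y; case/connectP: (conn x y) => s; elim: s x => [|z s IH] x /=.
    by move=> _ ->.
  by case/andP => exz pth lst; rewrite (hedge _ _ exz); exact: IH.
have n0 : (0 < n)%N by lia.
have n1 : (n.-1 < n)%N by lia.
pose i0 := Ordinal n0; pose i1 := Ordinal n1.
pose D : 'M[k]_n := diag_mx (\row_j ((j < a)%N)%:R).
have hM : A *m D *m B = (c i0 i0)%:M.
  apply/matrixP => i l; rewrite mul_mx_diag !mxE.
  have -> : \sum_j (\matrix_(i2, j0) (A i2 j0 * (\row_j1 ((j1 < a)%N)%:R) 0 j0)) i j * B j l
      = c i l by apply: eq_bigr => j _; rewrite !mxE.
  case: (eqVneq i l) => [<-|hil]; first by rewrite ?eqxx ?mulr1n (hall i i0).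
  by rewrite (hoff i l hil) mulr0n.
have hP : D = (c i0 i0)%:M.
  have := congr1 (fun X => B *m X *m A) hM.
  rewrite /= !mulmxA hBA mul1mx -mulmxA hBA mulmx1 => ->.
  by rewrite mul_mx_scalar -scalemxAl hBA scalemx1.
have := congr1 (fun X : 'M[k]_n => X i0 i0) hP; have := congr1 (fun X : 'M[k]_n => X i1 i1) hP.
rewrite /= !mxE !eqxx /= !mulr1n.
have -> : (i1 < a)%N = false by apply/negbTE; rewrite -leqNgt /= -subn1.
have -> : (i0 < a)%N = true by [].
by move=> <- /eqP; rewrite oner_eq0.
Qed.
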